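(* (1) If $\mathsf{A}_0,\dots,\mathsf{A}_{n-1}$ and $\mathsf{B}\neq\mathsf{0}$ are in $\mathbb{S}$ and $j<n$ is such that $\mathsf{A}_i\le\mathsf{A}_j$ for all $i<n$, then $\big(\sum_{i<n}\mathsf{A}_i\big)*\exp(\mathsf{B})\equiv\mathsf{A}_j*\exp(\mathsf{B})$. (2) If $\mathsf{A}\in\mathbb{S}$, then for every natural number $m$, $\exp(\mathsf{A})\cdot m\le\exp(\mathsf{A}+\mathsf{1})$.
   Context: Standard generating sets: $\mathrm{Homeo}_+(I)$ acts on $I=[0,1]$ on the right. Support $\mathrm{supt}(f)=\{t:tf\ne t\}$; extended support = interior of its closure; orbitals = components of the support, endpoints = transition points; a bump has exactly one orbital, positive if $tf>t$ there, else negative. A marking assigns to each bump $b$ with support $(u,v)$ a point $s_b\in(u,v)$; feet of $b$: $(u,s_b)$ and $[t_b,v)$ with $t_b=s_bb$ ($b$ positive) or $s_bb^{-1}$ ($b$ negative). A marked function has finitely many bumps, each marked. A finite set of marked functions is fast if no bump occurs in two of its elements and distinct bumps have disjoint feet. A standard function is a marked function whose extended support is an interval, with all positive bumps right of all negative bumps, and #positive $-$ #negative bumps $\in\{0,1\}$. For standard $f,g$: $f\ll g$ iff extended supports disjoint with $f$'s to the left; $f\sqsubset g$ iff closure of extended support of $f$ lies in extended support of $g$; $f<g$ iff $f\ll g$ or $f\sqsubset g$. $f^\circ$: if $f$ has $>2$ orbitals, $f$ restricted to the union of its non-extreme orbitals; if $f$ has 1 or 2 orbitals and the left foot of its positive bump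 is $(r,s)$, a positive bump with support $(r,s)$. $(f,g)$ is a standard pair if $\{f,g\}$ is fast and either $f\ll g$ or ($f\sqsubset g$ and $(g^\circ,f)$ is a standard pair). $\mathcal{S}$ = finite sets of standard functions, pairwise $<$-comparable, each pair $f<g$ a standard pair. Oscillation $o(f,g)$ for $f<g$: number of orbitals of $g$ containing a transition point of $f$. Signatures: the signature of $A\in\mathcal S$ is $(f,g)\mapsto o(f,g)$ on pairs $f<g$ of $A$; functions on pairs of finite linear orders are equivalent if an order-preserving bijection of bases carries one to the other; $\mathbb{S}$ is the set of signatures of members of $\mathcal S$ up to equivalence. $\mathsf{0},\mathsf{1}$: base sizes $0,1$. $\mathsf{A}+\mathsf{B}$: base $A$ followed by $B$, agreeing with $\mathsf{A},\mathsf{B}$ on their bases, value $0$ across; $\sum_{i<n}$ is iterated sum left to right and $\mathsf{A}\cdot m=\sum_{i<m}\mathsf{A}$. $\exp(\mathsf{A})$: same base, values $\mathsf{A}(i,j)+1$. $\mathsf{A}*\exp(\mathsf{B})$: base $A$ followed by $B$, agreeing with $\mathsf{A}$ on $A$, with $\exp(\mathsf{B})$ on $B$, value $1$ across (these operations stay in $\mathbb{S}$). Inflation: for $\mathsf{A}$ with base $A$ and $m\in A$, $\mathsf{A}^m$ has base $A\cup\{i^m:i\in A,\ i<m,\ \mathsf{A}(i,m)>0\}$ (new symbols), the new elements placed above all elements of $A$ below $m$ and below $m$, with $i^m<j^m$ iff $i<j$; it extends $\mathsf{A}$ by, for $i,j<m\le k$ (with $\mathsf{A}(m,m)=\infty$):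 $\mathsf{A}^m(i^m,j^m)=\mathsf{A}(i,j)$, $\mathsf{A}^m(i,j^m)=\min(\mathsf{A}(j,m)-1,\mathsf{A}(i,m))$, $\mathsf{A}^m(i^m,k)=\min(\mathsf{A}(i,m),\mathsf{A}(m,k))$. $\mathsf{A}\le\mathsf{B}$ iff there is a sequence $\mathsf{B}_0=\mathsf{B},\dots,\mathsf{B}_n=\mathsf{A}$ with each $\mathsf{B}_{i+1}$ (equivalent to) a restriction to a subset of the base of an inflation of $\mathsf{B}_i$; $\mathsf{A}\equiv\mathsf{B}$ iff $\mathsf{A}\le\mathsf{B}\le\mathsf{A}$. *)

(* Defs.v *)
From Stdlib Require Import Reals Lra Lia List Arith ClassicalDescription.
Open Scope R_scope.

Definition inI (t : R) : Prop := 0 <= t <= 1.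

(* Homeo_+(I): orientation-preserving homeomorphisms of [0,1]; the action
   is on the right, t f is written (f t).  Values outside [0,1] are ignored. *)
Definition homeo (f : R -> R) : Prop :=
  (forall t, inI t -> inI (f t)) /\
  (forall s t, inI s -> inI t -> s < t -> f s < f t) /\
  (forall y, inI y -> exists t, inI t /\ f t = y).

Definition support (f : R -> R) (t : R) : Prop := inI t /\ f t <> t.

Definition cl (S : R -> Prop) (x : R) : Prop :=
  forall e, 0 < e -> exists y, S y /\ Rabs (y - x) < e.
Definition intr (S : R -> Prop) (x : R) : Prop :=
  exists e, 0 < e /\ forall y, Rabs (y - x) < e -> S y.
Definition is_interval (S : R -> Prop) : Prop :=
  forall x y z, S x -> S z -> x <= y <= z -> S y.

(* A marked function: the homeomorphism mf, its nb orbitals listed from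
   left to right, orbital k being the open interval (bu k, bv k), with
   marking point bs k. *)
Record marked := MkM {
  mf : R -> R;
  nb : nat;
  bu : nat -> R;
  bs : nat -> R;
  bv : nat -> R }.

Definition in_orb (M : marked) (k : nat) (t : R) : Prop :=
  bu M k < t < bv M k.

(* The data are a genuine marked function: the listed intervals are
   pairwise disjoint open intervals (ordered left to right) whose union is
   the support of mf, i.e. they are exactly the orbitals (components of the
   support), finitely many, each with a marking point in it. *)
Definition is_marked (M : marked) : Prop :=
  homeo (mf M) /\
  (forall k, (k < nb M)%nat -> 0 <= bu M k < bs M k /\ bs M k < bv M k <= 1) /\
  (forall k, (S k < nb M)%nat -> bv M k <= bu M (S k)) /\
  (forall t, support (mf M) t <-> exists k, (k < nb M)%nat /\ in_orb M k t).

Definition pos (M : marked) (k : nat) : Prop :=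
  forall t, in_orb M k t -> t < mf M t.

Definition bumpf (M : marked) (k : nat) (t : R) : R :=
  if Rlt_dec (bu M k) t then (if Rlt_dec t (bv M k) then mf M t else t) else t.

(* t_b = s_b b (positive) or s_b b^{-1} (negative) *)
Definition tb (M : marked) (k : nat) (t : R) : Prop :=
  (pos M k /\ t = mf M (bs M k)) \/
  (~ pos M k /\ inI t /\ mf M t = bs M k).

Definition in_foot (M : marked) (k : nat) (x : R) : Prop :=
  (bu M k < x < bs M k) \/ (exists t, tb M k t /\ t <= x < bv M k).

Definition fast2 (f g : marked) : Prop :=
  (~ exists k l, (k < nb f)%nat /\ (l < nb g)%nat /\
        forall t, inI t -> bumpf f k t = bumpf g l t) /\
  (forall k l, (k < nb f)%nat -> (l < nb f)%nat -> k <> l ->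
        forall x, ~ (in_foot f k x /\ in_foot f l x)) /\
  (forall k l, (k < nb g)%nat -> (l < nb g)%nat -> k <> l ->
        forall x, ~ (in_foot g k x /\ in_foot g l x)) /\
  (forall k l, (k < nb f)%nat -> (l < nb g)%nat ->
        forall x, ~ (in_foot f k x /\ in_foot g l x)).

Fixpoint cnt (P : nat -> Prop) (n : nat) : nat :=
  match n with
  | O => O
  | S n' => (cnt P n' + (if excluded_middle_informative (P n') then 1 else 0))%nat
  end.

Definition esupp (M : marked) : R -> Prop := intr (cl (support (mf M))).

Definition standard (M : marked) : Prop :=
  is_marked M /\
  (exists x, esupp M x) /\ is_interval (esupp M) /\
  (forall k l, (k < nb M)%nat -> (l < nb M)%nat -> ~ pos M k -> pos M l ->
        bv M k <= bu M l) /\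
  (cnt (pos M) (nb M) = cnt (fun k => ~ pos M k) (nb M) \/
   cnt (pos M) (nb M) = S (cnt (fun k => ~ pos M k) (nb M))).

Definition ll (f g : marked) : Prop :=
  (forall x, ~ (esupp f x /\ esupp g x)) /\
  (forall x y, esupp f x -> esupp g y -> x < y).
Definition sq (f g : marked) : Prop :=
  forall x, cl (esupp f) x -> esupp g x.
Definition slt (f g : marked) : Prop := ll f g \/ sq f g.

Definition circ (g h : marked) : Prop :=
  ((2 < nb g)%nat /\ is_marked h /\ nb h = (nb g - 2)%nat /\
   (forall k, (k < nb h)%nat ->
      bu h k = bu g (S k) /\ bs h k = bs g (S k) /\ bv h k = bv g (S k)) /\
   (forall t, inI t ->
      ((exists k, (k < nb h)%nat /\ in_orb h k t) -> mf h t = mf g t) /\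
      (~ (exists k, (k < nb h)%nat /\ in_orb h k t) -> mf h t = t)))
  \/
  ((1 <= nb g <= 2)%nat /\
   exists k, (k < nb g)%nat /\ pos g k /\
     is_marked h /\ nb h = 1%nat /\ bu h 0%nat = bu g k /\ bv h 0%nat = bs g k /\
     pos h 0%nat).

Inductive std_pair : marked -> marked -> Prop :=
| SP_ll f g : fast2 f g -> ll f g -> std_pair f g
| SP_sq f g h : fast2 f g -> sq f g -> circ g h -> std_pair h f -> std_pair f g.

Definition osc (f g : marked) : nat :=
  cnt (fun l => exists k, (k < nb f)%nat /\
         (in_orb g l (bu f k) \/ in_orb g l (bv f k))) (nb g).

(* A signature: base {0,...,sz-1} with its usual order; sval i j is the
   value on the pair i < j (values for other pairs are irrelevant). *)
Record sig := MkSig { sz : nat; sval : nat -> nat -> nat }.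

Open Scope nat_scope.

Definition sig_eqv (A B : sig) : Prop :=
  sz A = sz B /\ forall i j, i < j < sz A -> sval A i j = sval B i j.

(* membership in S (the signatures of members of the family S), up to
   equivalence: the members f_0 < f_1 < ... of a set in S listed in order *)
Definition in_SS (A : sig) : Prop :=
  exists F : nat -> marked,
    (forall i, i < sz A -> standard (F i)) /\
    (forall i j, i < j < sz A ->
        slt (F i) (F j) /\ std_pair (F i) (F j) /\ sval A i j = osc (F i) (F j)).

Definition sig0 : sig := MkSig 0 (fun _ _ => 0).
Definition sig1 : sig := MkSig 1 (fun _ _ => 0).

Definition sig_sum (A B : sig) : sig :=
  MkSig (sz A + sz B) (fun i j =>
    if j <? sz A then sval A i j
    else if sz A <=? i then sval B (i - sz A) (j - sz A)
    else 0).

Definition sig_exp (A : sig) : sig := MkSig (sz A) (fun i j => S (sval A i j)).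

Definition sig_star_exp (A B : sig) : sig :=
  MkSig (sz A + sz B) (fun i j =>
    if j <? sz A then sval A i j
    else if sz A <=? i then S (sval B (i - sz A) (j - sz A))
    else 1).

Fixpoint sig_bsum (A : nat -> sig) (n : nat) : sig :=
  match n with
  | O => sig0
  | S n' => sig_sum (sig_bsum A n') (A n')
  end.

Definition sig_mul (A : sig) (m : nat) : sig := sig_bsum (fun _ => A) m.

(* inflation A^m.  New elements i^m (i < m, A(i,m) > 0), listed increasingly,
   are placed at positions m, m+1, ..., m+p-1; old elements k >= m shift to
   k + p. *)
Definition infl_new (A : sig) (m : nat) : list nat :=
  filter (fun i => 0 <? sval A i m) (seq 0 m).

Definition infl (A : sig) (m : nat) : sig :=
  let P := infl_new A m in
  let p := length P in
  let cls y := if y <? m then (false, y)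
               else if y <? m + p then (true, nth (y - m) P 0)
               else (false, y - p) in
  MkSig (sz A + p) (fun x y =>
    match cls x, cls y with
    | (false, a), (false, b) => sval A a b
    | (true, a), (true, b) => sval A a b
    | (false, a), (true, b) => Nat.min (sval A b m - 1) (sval A a m)
    | (true, a), (false, k) =>
        if k =? m then sval A a m (* A(m,m) = infinity *)
        else Nat.min (sval A a m) (sval A m k)
    end).

Definition embeds (A' A : sig) : Prop :=
  exists f : nat -> nat,
    (forall i j, i < j < sz A' -> f i < f j) /\
    (forall i, i < sz A' -> f i < sz A) /\
    (forall i j, i < j < sz A' -> sval A' i j = sval A (f i) (f j)).

Definition sig_step (C B : sig) : Prop :=
  exists m, m < sz B /\ embeds C (infl B m).

Inductive sig_le : sig -> sig -> Prop :=
| sig_le_refl A B : sig_eqv A B -> sig_le A B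
| sig_le_step A C B : sig_step C B -> sig_le A C -> sig_le A B.

Definition sig_equiv (A B : sig) : Prop := sig_le A B /\ sig_le B A.

(* Main.v *)
Require Import Defs.
From Stdlib Require Import Reals Lra Lia List Arith.
Open Scope nat_scope.

Ltac dec := repeat match goal with
 | |- context [?a <? ?b] => destruct (Nat.ltb_spec a b)
 | |- context [?a <=? ?b] => destruct (Nat.leb_spec a b)
 | |- context [?a =? ?b] => destruct (Nat.eqb_spec a b)
 | H : context [?a <? ?b] |- _ => destruct (Nat.ltb_spec a b)
 | H : context [?a <=? ?b] |- _ => destruct (Nat.leb_spec a b)
 end; try lia.

Definition orig_c (G : sig) (m x a : nat) : Prop :=
  (x < m /\ a = x) \/ (m + length (infl_new G m) <= x /\ a = x - length (infl_new G m)).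
Definition new_c (G : sig) (m x a : nat) : Prop :=
  m <= x < m + length (infl_new G m) /\ a = nth (x - m) (infl_new G m) 0.

Lemma infl_sz G m : sz (infl G m) = sz G + length (infl_new G m).
Proof. reflexivity. Qed.

Lemma L1 G m x y a b : orig_c G m x a -> orig_c G m y b -> sval (infl G m) x y = sval G a b.
Proof.
  unfold orig_c; intros Hx Hy; unfold infl; cbn zeta; cbn [sval].
  destruct Hx as [[? ?]|[? ?]]; destruct Hy as [[? ?]|[? ?]]; subst; dec.
Qed.
Lemma L2 G m x y a b : new_c G m x a -> new_c G m y b -> sval (infl G m) x y = sval G a b.
Proof.
  unfold new_c; intros Hx Hy; unfold infl; cbn zeta; cbn [sval].
  destruct Hx as [? ?]; destruct Hy as [? ?]; subst; dec.
Qed.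
Lemma L3 G m x y a b : orig_c G m x a -> new_c G m y b ->
  sval (infl G m) x y = Nat.min (sval G b m - 1) (sval G a m).
Proof.
  unfold orig_c, new_c; intros Hx Hy; unfold infl; cbn zeta; cbn [sval].
  destruct Hx as [[? ?]|[? ?]]; destruct Hy as [? ?]; subst; dec.
Qed.
Lemma L4 G m x y a k : new_c G m x a -> orig_c G m y k ->
  sval (infl G m) x y = if k =? m then sval G a m else Nat.min (sval G a m) (sval G m k).
Proof.
  unfold orig_c, new_c; intros Hx Hy; unfold infl; cbn zeta; cbn [sval].
  destruct Hy as [[? ?]|[? ?]]; destruct Hx as [? ?]; subst; dec.
Qed.

Lemma cls_cases G m x : (exists a, orig_c G m x a) \/ (exists a, new_c G m x a).
Proof.
  unfold orig_c, new_c.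
  destruct (Nat.ltb_spec x m). left; eauto.
  destruct (Nat.ltb_spec x (m + length (infl_new G m))). right; eauto.
  left; eauto.
Qed.

Lemma new_prop G m x a : new_c G m x a -> a < m /\ 0 < sval G a m.
Proof.
  unfold new_c; intros [H ->].
  assert (HI : In (nth (x - m) (infl_new G m) 0) (infl_new G m)) by (apply nth_In; lia).
  unfold infl_new in HI at 2. apply filter_In in HI as [H1 H2].
  apply in_seq in H1. apply Nat.ltb_lt in H2. lia.
Qed.

Lemma infl_new0 G : infl_new G 0 = nil.
Proof. reflexivity. Qed.

Lemma infl0_val G x y : sval (infl G 0) x y = sval G x y.
Proof.
  apply L1; unfold orig_c; rewrite infl_new0; simpl; right; lia.
Qed.

Lemma embeds_step C G : embeds C G -> 0 < sz G -> sig_step C G.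
Proof.
  intros [f [H1 [H2 H3]]] Hs. exists 0. split; [lia|].
  exists f. repeat split; auto.
  - intros i Hi. specialize (H2 i Hi). rewrite infl_sz, infl_new0. simpl. lia.
  - intros i j Hij. rewrite infl0_val. auto.
Qed.

Lemma eqv_embeds C G : sig_eqv C G -> embeds C G.
Proof.
  intros [Hs Hv]. exists (fun i => i). repeat split; auto; intros; lia.
Qed.

Lemma embeds_le C G : embeds C G -> 0 < sz G -> sig_le C G.
Proof.
  intros. eapply sig_le_step. apply embeds_step; eauto. apply sig_le_refl. split; auto.
Qed.

Lemma transport X G1 G2 : sig_le X G1 -> sig_eqv G1 G2 -> 0 < sz G2 -> sig_le X G2.
Proof.
  intros. eapply sig_le_step; eauto. apply embeds_step; auto. apply eqv_embeds; auto.
Qed.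
Lemma eqv_refl A : sig_eqv A A.
Proof. split; auto. Qed.
Lemma eqv_sym A B : sig_eqv A B -> sig_eqv B A.
Proof. intros [H1 H2]; split; auto. intros; symmetry; apply H2; lia. Qed.
Lemma eqv_trans A B C : sig_eqv A B -> sig_eqv B C -> sig_eqv A C.
Proof. intros [H1 H2] [H3 H4]; split. lia. intros; rewrite H2, H4; auto; lia. Qed.

Ltac fin := try (f_equal; lia); try (f_equal; f_equal; lia).

Lemma sum_congr P P' Q Q' : sig_eqv P P' -> sig_eqv Q Q' -> sig_eqv (sig_sum P Q) (sig_sum P' Q').
Proof.
  intros [H1 H2] [H3 H4]; split; simpl. lia.
  intros i j Hij. rewrite <- H1. dec.
  - apply H2; lia.
  - apply H4; lia.
Qed.

Lemma star_congr P P' Q Q' : sig_eqv P P' -> sig_eqv Q Q' -> sig_eqv (sig_star_exp P Q) (sig_star_exp P' Q').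
Proof.
  intros [H1 H2] [H3 H4]; split; simpl. lia.
  intros i j Hij. rewrite <- H1. dec.
  - apply H2; lia.
  - f_equal; apply H4; lia.
Qed.

Lemma sum_assoc P Q R : sig_eqv (sig_sum (sig_sum P Q) R) (sig_sum P (sig_sum Q R)).
Proof.
  split; simpl. lia. intros i j Hij. dec; fin.
Qed.

Lemma sum_0l P : sig_eqv (sig_sum sig0 P) P.
Proof. split; simpl. lia. intros i j Hij. dec; fin. Qed.
Lemma sum_0r P : sig_eqv (sig_sum P sig0) P.
Proof. split; simpl. lia. intros i j Hij. dec; fin. Qed.

Lemma mul_S Y q : sig_mul Y (S q) = sig_sum (sig_mul Y q) Y.
Proof. reflexivity. Qed.

Lemma mul_comm Y q : sig_eqv (sig_sum Y (sig_mul Y q)) (sig_mul Y (S q)).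
Proof.
  induction q.
  - rewrite mul_S. simpl. eapply eqv_trans. apply sum_0r. apply eqv_sym, sum_0l.
  - rewrite (mul_S Y (S q)). rewrite mul_S.
    eapply eqv_trans. apply eqv_sym, sum_assoc.
    apply sum_congr; [|apply eqv_refl]. rewrite <- mul_S. exact IHq.
Qed.

Lemma sz_mul Y k : sz (sig_mul Y k) = k * sz Y.
Proof. induction k; simpl; auto. unfold sig_mul in IHk. rewrite IHk. lia. Qed.

Lemma mul_block Y k i j : 1 <= k -> i < sz Y -> j < sz Y -> sval (sig_mul Y k) i j = sval Y i j.
Proof.
  intros Hk Hi Hj. induction k. lia.
  rewrite mul_S. destruct k.
  - simpl. dec; fin.
  - pose proof (sz_mul Y (S k)).
    unfold sig_sum at 1; cbn [sval]. dec; try nia.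

Qed.
Lemma filter_all {A} (f : A -> bool) l : (forall x, In x l -> f x = true) -> filter f l = l.
Proof. induction l; simpl; intros H; auto. rewrite H by auto. rewrite IHl; auto. Qed.

Lemma double_abs Z Y B : sz Y <= sz Z ->
  (forall i j, i < sz Y -> j < sz Y -> sval Z i j = sval Y i j) -> 0 < sz B ->
  sig_step (sig_star_exp (sig_sum Z Y) B) (sig_star_exp Z B).
Proof.
  intros HYZ HZY HB. set (G := sig_star_exp Z B).
  assert (Hnew : infl_new G (sz Z) = seq 0 (sz Z)).
  { unfold infl_new. apply filter_all. intros x Hx. apply in_seq in Hx.
    unfold G; simpl. dec. }
  assert (Ho1 : forall x, x < sz Z -> orig_c G (sz Z) x x).
  { intros; left; auto. }
  assert (Hn : forall x, sz Z <= x < sz Z + sz Y -> new_c G (sz Z) x (x - sz Z)).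
  { intros x Hx; unfold new_c; rewrite Hnew, length_seq, seq_nth; lia. }
  assert (Ho2 : forall x, sz Z + sz Y <= x -> orig_c G (sz Z) (x + sz Z - sz Y) (x - sz Y)).
  { intros x Hx; unfold orig_c; rewrite Hnew, length_seq; right; lia. }
  exists (sz Z). split. unfold G; simpl; lia.
  exists (fun x => if x <? sz Z + sz Y then x else x + sz Z - sz Y).
  split; [|split].
  - intros i j Hij; dec.
  - intros i Hi. rewrite infl_sz, Hnew, length_seq. unfold G; simpl in *; dec.
  - intros i j Hij. simpl in Hij.
    destruct (Nat.ltb_spec i (sz Z + sz Y)); destruct (Nat.ltb_spec j (sz Z + sz Y)); try lia.
    + destruct (Nat.ltb_spec j (sz Z)).
      * rewrite (L1 _ _ _ _ i j) by first [apply Ho1; lia | apply Hn; lia | apply Ho2; lia]. unfold G; simpl; dec.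
      * destruct (Nat.ltb_spec i (sz Z)).
        -- rewrite (L3 _ _ _ _ i (j - sz Z)) by first [apply Ho1; lia | apply Hn; lia | apply Ho2; lia]. unfold G; simpl; dec.
        -- rewrite (L2 _ _ _ _ (i - sz Z) (j - sz Z)) by first [apply Ho1; lia | apply Hn; lia | apply Ho2; lia]. unfold G; simpl; dec.
           try (rewrite HZY; try lia; fin).
    + destruct (Nat.ltb_spec i (sz Z)).
      * rewrite (L1 _ _ _ _ i (j - sz Y)) by first [apply Ho1; lia | apply Hn; lia | apply Ho2; lia]. unfold G; simpl; dec.
      * rewrite (L4 _ _ _ _ (i - sz Z) (j - sz Y)) by first [apply Ho1; lia | apply Hn; lia | apply Ho2; lia]. unfold G; simpl; dec.
    + rewrite (L1 _ _ _ _ (i - sz Y) (j - sz Y)) by first [apply Ho1; lia | apply Hn; lia | apply Ho2; lia]. unfold G; simpl; dec. fin.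
Qed.
Ltac fin2 := repeat match goal with |- context [?x + ?y - ?x] => replace (x+y-x) with y by lia end;
  try reflexivity; try lia.

Definition ctx (P0 Z Q B : sig) : sig := sig_star_exp (sig_sum (sig_sum P0 Z) Q) B.

Lemma filter_none {A} (f : A -> bool) l : (forall x, In x l -> f x = false) -> filter f l = nil.
Proof. induction l; simpl; intros H; auto. rewrite H by auto. apply IHl; auto. Qed.

Lemma map_add_seq o s m : map (Nat.add o) (seq s m) = seq (o + s) m.
Proof. revert s; induction m; intros s; simpl; auto. rewrite IHm. f_equal. f_equal. lia. Qed.

Lemma lift_step P0 C Z Q B : sig_step C Z -> sig_step (ctx P0 C Q B) (ctx P0 Z Q B).
Proof.
  intros [m [Hm [f [Hf1 [Hf2 Hf3]]]]].
  set (G := ctx P0 Z Q B).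
  set (o := sz P0).
  assert (Hnew : infl_new G (o + m) = map (Nat.add o) (infl_new Z m)).
  { unfold infl_new. rewrite seq_app, filter_app.
    rewrite filter_none.
    2:{ intros x Hx. apply in_seq in Hx. unfold G, ctx, o in *; simpl. dec. }
    rewrite app_nil_l. replace (0 + o) with (o + 0) by lia. rewrite <- (map_add_seq o 0 m), filter_map_swap. f_equal.
    apply filter_ext_in. intros a Ha. apply in_seq in Ha.
    unfold G, ctx, o in *; simpl.
    replace (sz P0 + a - sz P0) with a by lia. replace (sz P0 + m - sz P0) with m by lia. dec. }
  set (p := length (infl_new Z m)).
  assert (Hp : length (infl_new G (o + m)) = p) by (rewrite Hnew, length_map; auto).
  assert (T0 : forall i, i < o -> orig_c G (o + m) i i).
  { intros; left; split; auto; lia. }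
  assert (T1 : forall y a, orig_c Z m y a -> orig_c G (o + m) (o + y) (o + a)).
  { unfold orig_c; intros y a H; rewrite Hp; fold p in H; lia. }
  assert (T2 : forall y a, new_c Z m y a -> new_c G (o + m) (o + y) (o + a)).
  { unfold new_c; intros y a H; rewrite Hp; fold p in H. split; [lia|].
    destruct H as [H ->]. rewrite Hnew. replace (o + y - (o + m)) with (y - m) by lia.
    rewrite (nth_indep (map (Nat.add o) (infl_new Z m)) 0 (o + 0)) by (rewrite length_map; fold p; lia).
    rewrite map_nth. lia. }
  assert (T3 : forall J, o + sz Z <= J -> orig_c G (o + m) (J + p) J).
  { unfold orig_c; intros; rewrite Hp; right; lia. }
  assert (Bo : forall y a, y < sz Z + p -> orig_c Z m y a -> a < sz Z).
  { unfold orig_c; fold p; intros; lia. }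
  assert (Hf2' : forall x, x < sz C -> f x < sz Z + p).
  { intros x Hx; specialize (Hf2 x Hx); rewrite infl_sz in Hf2; fold p in Hf2; lia. }
  exists (o + m). split. { unfold G, ctx, o; simpl; lia. }
  exists (fun i => if i <? o then i else if i <? o + sz C then o + f (i - o)
                   else i - sz C + sz Z + p).
  split; [|split].
  - intros i j Hij. simpl in Hij.
    destruct (Nat.ltb_spec i o); destruct (Nat.ltb_spec j o); try lia;
    destruct (Nat.ltb_spec i (o + sz C)); destruct (Nat.ltb_spec j (o + sz C)); try lia.
    all: try (specialize (Hf2' (j - o) ltac:(lia)); lia).
    all: try (specialize (Hf1 (i - o) (j - o) ltac:(lia)); lia).
    all: try (specialize (Hf2' (i - o) ltac:(lia)); lia).
  - intros i Hi. rewrite infl_sz, Hp. unfold G, ctx in *; simpl in *. fold o in Hi |- *.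
    destruct (Nat.ltb_spec i o); try lia.
    destruct (Nat.ltb_spec i (o + sz C)); try lia.
    pose proof (Hf2' (i - o)); lia.
  - intros i j Hij. unfold ctx at 1 in Hij. simpl in Hij.
    assert (Hz : m < sz Z) by exact Hm.
    destruct (Nat.ltb_spec i o); destruct (Nat.ltb_spec j o); try lia;
    destruct (Nat.ltb_spec i (o + sz C)); destruct (Nat.ltb_spec j (o + sz C)); try lia.
    +
      rewrite (L1 _ _ _ _ _ _ (T0 i ltac:(lia)) (T0 j ltac:(lia))).
      unfold G, ctx, o; simpl; dec.
    +
      specialize (Hf2' (j - o) ltac:(lia)).
      destruct (cls_cases Z m (f (j - o))) as [[a Ha]|[a Ha]].
      * specialize (Bo _ _ Hf2' Ha).
        rewrite (L1 _ _ _ _ _ _ (T0 i ltac:(lia)) (T1 _ _ Ha)).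
        unfold G, ctx, o in *; simpl; dec.
      * pose proof (new_prop _ _ _ _ Ha).
        rewrite (L3 _ _ _ _ _ _ (T0 i ltac:(lia)) (T2 _ _ Ha)).
        unfold G, ctx, o in *; simpl; dec.
    +
      rewrite (L1 _ _ _ _ _ _ (T0 i ltac:(lia)) (T3 (j - sz C + sz Z) ltac:(lia))).
      unfold G, ctx, o in *; simpl; dec.
    +
      pose proof (Hf2' (j - o) ltac:(lia)) as Fj.
      pose proof (Hf2' (i - o) ltac:(lia)) as Fi.
      assert (E : sval (ctx P0 C Q B) i j = sval (infl Z m) (f (i - o)) (f (j - o))).
      { rewrite <- Hf3 by lia. unfold ctx, o in *; simpl; dec; fin. }
      rewrite E.
      destruct (cls_cases Z m (f (i - o))) as [[a Ha]|[a Ha]];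
      destruct (cls_cases Z m (f (j - o))) as [[b Hb]|[b Hb]].
      * pose proof (Bo _ _ Fi Ha); pose proof (Bo _ _ Fj Hb).
        rewrite (L1 _ _ _ _ _ _ Ha Hb), (L1 _ _ _ _ _ _ (T1 _ _ Ha) (T1 _ _ Hb)).
        unfold G, ctx, o in *; simpl; dec; fin2.
      * pose proof (Bo _ _ Fi Ha); pose proof (new_prop _ _ _ _ Hb).
        rewrite (L3 _ _ _ _ _ _ Ha Hb), (L3 _ _ _ _ _ _ (T1 _ _ Ha) (T2 _ _ Hb)).
        unfold G, ctx, o in *; simpl; dec; fin2.
      * pose proof (new_prop _ _ _ _ Ha); pose proof (Bo _ _ Fj Hb).
        rewrite (L4 _ _ _ _ _ _ Ha Hb), (L4 _ _ _ _ _ _ (T2 _ _ Ha) (T1 _ _ Hb)).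
        unfold G, ctx, o in *; simpl; dec; fin2.
      * pose proof (new_prop _ _ _ _ Ha); pose proof (new_prop _ _ _ _ Hb).
        rewrite (L2 _ _ _ _ _ _ Ha Hb), (L2 _ _ _ _ _ _ (T2 _ _ Ha) (T2 _ _ Hb)).
        unfold G, ctx, o in *; simpl; dec; fin2.
    +
      specialize (Hf2' (i - o) ltac:(lia)).
      destruct (cls_cases Z m (f (i - o))) as [[a Ha]|[a Ha]].
      * specialize (Bo _ _ Hf2' Ha).
        rewrite (L1 _ _ _ _ _ _ (T1 _ _ Ha) (T3 (j - sz C + sz Z) ltac:(lia))).
        unfold G, ctx, o in *; simpl; dec.
      * pose proof (new_prop _ _ _ _ Ha).
        rewrite (L4 _ _ _ _ _ _ (T2 _ _ Ha) (T3 (j - sz C + sz Z) ltac:(lia))).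
        unfold G, ctx, o in *; simpl; dec; fin2.
    +
      rewrite (L1 _ _ _ _ _ _ (T3 (i - sz C + sz Z) ltac:(lia)) (T3 (j - sz C + sz Z) ltac:(lia))).
      unfold G, ctx, o in *; simpl; dec; fin.
Qed.
Lemma lift_le P0 Q B Z1 Z2 : 0 < sz B -> sig_le Z1 Z2 ->
  forall X, sig_le X (ctx P0 Z1 Q B) -> sig_le X (ctx P0 Z2 Q B).
Proof.
  intros HB H. induction H; intros X HX.
  - eapply transport; eauto.
    + unfold ctx. apply star_congr; [|apply eqv_refl].
      apply sum_congr; [|apply eqv_refl]. apply sum_congr; [apply eqv_refl|auto].
    + unfold ctx; simpl; lia.
  - eapply sig_le_step. apply lift_step; eauto. apply IHsig_le; auto.
Qed.

Lemma double_le Y B : 0 < sz B -> forall k, 1 <= k ->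
  forall X, sig_le X (sig_star_exp (sig_mul Y k) B) -> sig_le X (sig_star_exp Y B).
Proof.
  intros HB k. induction k; intros Hk X HX. lia.
  destruct k.
  - eapply transport; eauto. apply star_congr; [apply sum_0l|apply eqv_refl]. simpl; lia.
  - apply IHk; [lia|]. eapply sig_le_step; [|exact HX].
    rewrite mul_S. apply double_abs; auto.
    + rewrite sz_mul. nia.
    + intros; apply mul_block; auto; lia.
Qed.

Lemma part2 A m : sig_le (sig_mul (sig_exp A) m) (sig_exp (sig_sum A sig1)).
Proof.
  set (Y := sig_exp A).
  assert (H1 : sig_le (sig_mul Y m) (sig_star_exp (sig_mul Y (S m)) sig1)).
  { apply embeds_le; [|simpl; lia].
    exists (fun i => i). split; [|split].
    - intros; lia.
    - intros i Hi. rewrite mul_S. unfold sig_star_exp, sig_sum; cbn [sz]. lia.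
    - intros i j Hij. rewrite mul_S. unfold sig_star_exp, sig_sum; cbn [sval sz]. dec. }
  apply double_le in H1; [|simpl; lia|lia].
  eapply transport; eauto.
  - split; simpl. lia. intros i j Hij. dec.
  - simpl; lia.
Qed.

Lemma sz_bsum_mono (A : nat -> sig) n j : j < n -> sz (sig_bsum A j) + sz (A j) <= sz (sig_bsum A n).
Proof.
  induction n; intros Hj. lia. simpl.
  destruct (Nat.eq_dec j n). subst; lia. specialize (IHn ltac:(lia)). lia.
Qed.

Lemma bsum_block (A : nat -> sig) n j : j < n -> forall a b, a < b < sz (A j) ->
  sval (sig_bsum A n) (sz (sig_bsum A j) + a) (sz (sig_bsum A j) + b) = sval (A j) a b.
Proof.
  induction n; intros Hj a b Hab. lia.
  cbn [sig_bsum]. unfold sig_sum at 1; cbn [sval sz].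
  destruct (Nat.eq_dec j n).
  - subst. dec. fin2.
  - pose proof (sz_bsum_mono A n j ltac:(lia)). dec. apply IHn; lia.
Qed.

Theorem lemma8p3 :
  (forall (n : nat) (A : nat -> sig) (B : sig) (j : nat),
     (forall i, (i < n)%nat -> in_SS (A i)) ->
     in_SS B -> sz B <> 0%nat ->
     (j < n)%nat ->
     (forall i, (i < n)%nat -> sig_le (A i) (A j)) ->
     sig_equiv (sig_star_exp (sig_bsum A n) B) (sig_star_exp (A j) B))
  /\
  (forall A : sig, in_SS A ->
     forall m : nat, sig_le (sig_mul (sig_exp A) m) (sig_exp (sig_sum A sig1))).
Proof.
  split.
  2:{ intros; apply part2. }
  intros n A B j _ _ HB Hj Hle.
  assert (HB' : 0 < sz B) by lia.
  set (Y := A j). set (X := sig_star_exp (sig_bsum A n) B).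
  assert (Hk : forall k, k <= n ->
     sig_le X (sig_star_exp (sig_sum (sig_bsum A (n - k)) (sig_mul Y k)) B)).
  { induction k; intros Hkn.
    - apply sig_le_refl. rewrite Nat.sub_0_r. unfold X.
      apply star_congr; [|apply eqv_refl]. apply eqv_sym, sum_0r.
    - specialize (IHk ltac:(lia)).
      replace (n - k) with (S (n - S k)) in IHk by lia.
      set (r := n - S k) in *.
      change (sig_le X (ctx (sig_bsum A r) (A r) (sig_mul Y k) B)) in IHk.
      apply (lift_le _ _ _ _ Y HB' (Hle r ltac:(lia))) in IHk.
      eapply transport; eauto.
      + unfold ctx. apply star_congr; [|apply eqv_refl].
        eapply eqv_trans. apply sum_assoc. apply sum_congr. apply eqv_refl. apply mul_comm.
      + simpl; lia. }
  split.
  - specialize (Hk n (le_n n)). rewrite Nat.sub_diag in Hk.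
    apply (double_le Y B HB' n ltac:(lia)).
    eapply transport; eauto. apply star_congr; [apply sum_0l|apply eqv_refl]. simpl; lia.
  - apply embeds_le; [|unfold X; simpl; lia].
    exists (fun i => if i <? sz Y then sz (sig_bsum A j) + i else i - sz Y + sz (sig_bsum A n)).
    pose proof (sz_bsum_mono A n j Hj). fold Y in H.
    split; [|split].
    + intros a b Hab; simpl in Hab; dec.
    + intros a Ha; unfold X; simpl in *; dec.
    + intros a b Hab. simpl in Hab. unfold X, sig_star_exp; cbn [sval sz].
      destruct (Nat.ltb_spec a (sz Y)); destruct (Nat.ltb_spec b (sz Y)); try lia.
      * dec. unfold Y in *. rewrite bsum_block; auto; lia.
      * dec.
      * dec. fin.
Qed.
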